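(* Let $k=\mathbb{F}_3$, let $O_7(k)$ be the group of $7\times7$ matrices over $k$ orthogonal for the bilinear form $\langle x,y\rangle=x_1y_7+x_2y_6+\dots+x_7y_1$ on $k^7$, and let \[ A=\begin{pmatrix} 0&0&1&0&0&1&0\\ 1&0&0&0&0&0&1\\ 0&1&0&0&0&0&0\\ 0&0&0&0&0&0&0\\ 0&1&0&0&0&0&1\\ 0&0&1&0&1&0&0\\ 0&0&0&0&0&1&0 \end{pmatrix}. \] Then there exists $g\in O_7(k)$ such that $M=g^{-1}Ag$ satisfies $M_{ij}=0$ for all $(i,j)\in\{(4,1),(5,1),(5,2),(6,1),(6,2),(6,3),(7,1),(7,2),(7,3),(7,4)\}$. Even more, there exists $g\in O_7(k)$ such that $M=g^{-1}Ag$ satisfies these vanishing conditions and in addition $M_{31},M_{42},M_{53},M_{64},M_{75}\in k^\times$ (all remaining entries arbitrary).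
   Context: $M_{ij}$ denotes the entry in row $i$ and column $j$. *)

(* Defs.v *)
From HB Require Import structures.
From mathcomp Require Import all_boot all_order all_algebra.
Set Implicit Arguments. Unset Strict Implicit. Unset Printing Implicit Defensive.
Import GRing.Theory.
Local Open Scope ring_scope.

Notation k := 'F_3.

(* Gram matrix of <x,y> = x_1 y_7 + x_2 y_6 + ... + x_7 y_1 (0-based: i + j = 6). *)
Definition Jform : 'M[k]_7 := \matrix_(i < 7, j < 7) (if (i + j == 6)%N then 1 else 0).

Definition orthogonal7 (g : 'M[k]_7) : Prop := g^T *m Jform *m g = Jform.

Definition A_rows : seq (seq nat) :=
  [:: [:: 0; 0; 1; 0; 0; 1; 0];
      [:: 1; 0; 0; 0; 0; 0; 1];
      [:: 0; 1; 0; 0; 0; 0; 0];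
      [:: 0; 0; 0; 0; 0; 0; 0];
      [:: 0; 1; 0; 0; 0; 0; 1];
      [:: 0; 0; 1; 0; 1; 0; 0];
      [:: 0; 0; 0; 0; 0; 1; 0]]%N.

Definition Amat : 'M[k]_7 :=
  \matrix_(i < 7, j < 7) ((nth 0 (nth [::] A_rows i) j)%:R).

(* Entry M_{ij} with 1-based indices i, j in {1..7}. *)
Definition entry (M : 'M[k]_7) (i j : nat) : k := M (inord i.-1) (inord j.-1).

Definition zero_positions : seq (nat * nat) :=
  [:: (4,1); (5,1); (5,2); (6,1); (6,2); (6,3); (7,1); (7,2); (7,3); (7,4)]%N.

Definition unit_positions : seq (nat * nat) :=
  [:: (3,1); (4,2); (5,3); (6,4); (7,5)]%N.

(* Main.v *)
Require Import Defs.
From mathcomp Require Import all_boot all_order all_algebra.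
Import GRing.Theory.
Local Open Scope ring_scope.

Definition g_rows : seq (seq nat) :=
 [:: [:: 0; 0; 1; 0; 0; 0; 0]; [:: 0; 1; 0; 0; 0; 0; 0]; [:: 1; 0; 0; 0; 0; 0; 0];
     [:: 1; 1; 0; 1; 0; 0; 0]; [:: 1; 2; 0; 2; 0; 0; 1]; [:: 0; 1; 2; 2; 0; 1; 0];
     [:: 0; 1; 0; 0; 1; 0; 0]]%N.
Definition gmat : 'M[k]_7 := \matrix_(i < 7, j < 7) ((nth 0 (nth [::] g_rows i) j)%:R).

Definition enum7 : seq 'I_7 :=
  [:: @Ordinal 7 0 isT; @Ordinal 7 1 isT; @Ordinal 7 2 isT; @Ordinal 7 3 isT;
      @Ordinal 7 4 isT; @Ordinal 7 5 isT; @Ordinal 7 6 isT].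

Lemma mem7 (i : 'I_7) : i \in enum7.
Proof. by case: i => [[|[|[|[|[|[|[|m]]]]]]] Hm]. Qed.

Lemma sum7 (f : 'I_7 -> k) : \sum_(l < 7) f l = foldr (fun l acc => f l + acc) 0 enum7.
Proof.
rewrite (perm_big enum7) /=; first by rewrite !big_cons big_nil.
apply: uniq_perm; [exact: index_enum_uniq | by [] | move=> i].
by rewrite mem_index_enum mem7.
Qed.

Definition fmul (F G : 'I_7 -> 'I_7 -> k) (i j : 'I_7) : k :=
  foldr (fun l acc => F i l * G l j + acc) 0 enum7.

Lemma mxmul (F G : 'I_7 -> 'I_7 -> k) :
  (\matrix_(i, j) F i j) *m (\matrix_(i, j) G i j) = \matrix_(i, j) fmul F G i j.
Proof. by apply/matrixP => i j; rewrite !mxE; rewrite /fmul -sum7; apply: eq_bigr => l _; rewrite !mxE. Qed.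

Lemma mxtr (F : 'I_7 -> 'I_7 -> k) :
  (\matrix_(i, j) F i j)^T = \matrix_(i, j) F j i.
Proof. by apply/matrixP => i j; rewrite !mxE. Qed.

Lemma mxeq (F G : 'I_7 -> 'I_7 -> k) :
  all (fun i => all (fun j => F i j == G i j) enum7) enum7 ->
  (\matrix_(i, j) F i j) = \matrix_(i, j) G i j.
Proof.
move=> /allP H; apply/matrixP => i j; rewrite !mxE.
by move/allP: (H i (mem7 i)) => /(_ j (mem7 j)) /eqP.
Qed.

Lemma scal1 : (1%:M : 'M[k]_7) = \matrix_(i, j) (i == j)%:R.
Proof. by apply/matrixP => i j; rewrite !mxE. Qed.

Lemma gorth : orthogonal7 gmat.
Proof.
rewrite /orthogonal7 /gmat /Jform !mxtr !mxmul; apply: mxeq.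
vm_compute; reflexivity.
Qed.

Lemma JJ : Jform *m Jform = 1%:M.
Proof.
rewrite scal1 /Jform !mxmul; apply: mxeq.
vm_compute; reflexivity.
Qed.

Lemma ginv : invmx gmat = Jform *m gmat^T *m Jform.
Proof.
have H : Jform *m gmat^T *m Jform *m gmat = 1%:M.
  by rewrite -!mulmxA (mulmxA gmat^T) gorth JJ.
have [_ U] := mulmx1_unit H.
by rewrite -[RHS]mulmx1 -(mulmxV U) mulmxA H mul1mx.
Qed.

Lemma inord_nth (m : nat) : (m < 7)%N -> inord m = nth ord0 enum7 m :> 'I_7.
Proof.
move=> Hm; apply: val_inj; rewrite /= inordK //.
by move: m Hm; do 7?case=> //.
Qed.

Lemma entryE (F : 'I_7 -> 'I_7 -> k) a b : (a.-1 < 7)%N -> (b.-1 < 7)%N ->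
  entry (\matrix_(i, j) F i j) a b = F (nth ord0 enum7 a.-1) (nth ord0 enum7 b.-1).
Proof. by move=> Ha Hb; rewrite /entry mxE !inord_nth. Qed.

Theorem lemma2p4 :
  (exists g : 'M[k]_7, orthogonal7 g /\
     let M := invmx g *m Amat *m g in
     forall p, p \in zero_positions -> entry M p.1 p.2 = 0)
  /\
  (exists g : 'M[k]_7, orthogonal7 g /\
     let M := invmx g *m Amat *m g in
     (forall p, p \in zero_positions -> entry M p.1 p.2 = 0) /\
     (forall p, p \in unit_positions -> entry M p.1 p.2 != 0)).
Proof.
have Hz : all (fun p => entry (invmx gmat *m Amat *m gmat) p.1 p.2 == 0) zero_positions.
  rewrite ginv /gmat /Jform /Amat !mxtr !mxmul ; cbn [all zero_positions fst snd]; rewrite !entryE //.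
have Hu : all (fun p => entry (invmx gmat *m Amat *m gmat) p.1 p.2 != 0) unit_positions.
  rewrite ginv /gmat /Jform /Amat !mxtr !mxmul ; cbn [all unit_positions fst snd]; rewrite !entryE //.
split.
  exists gmat; split; first exact: gorth.
  by move=> /= p /(allP Hz) /eqP.
exists gmat; split; first exact: gorth.
split=> [p /(allP Hz) /eqP // | p /(allP Hu) //].
Qed.
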